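(* The families $\mathrm{SLT}_1$ and $\mathrm{RL}_1^V$ are incomparable; in particular $\{a\}\in\mathrm{RL}_1^V\setminus\mathrm{SLT}_1$ and $\{a\}\{b\}^*\{a\}\cup\{a\}\in\mathrm{SLT}_1\setminus\mathrm{RL}_1^V$.
   Context: Strictly locally testable languages: let $V$ be an alphabet and $k\ge1$. For $B,I,E\subseteq V^k$ and $F\subseteq V^{\le k-1}$, $\mathrm{slt}(B,I,E,F)$ is the language over $V$ consisting of all words in $F$ together with all words $a_1\cdots a_n$ ($a_i\in V$, $n\ge k$) with $a_1\cdots a_k\in B$, $a_{j+1}\cdots a_{j+k}\in I$ for all $1\le j\le n-k-1$, and $a_{n-k+1}\cdots a_n\in E$. $\mathrm{SLT}_k$ is the family of languages of this form. A right-linear grammar is $G=(N,T,P,S)$ with rules $A\to wB$ or $A\to w$ ($A,B\in N$, $w\in T^*$). For a regular language $L$, $\mathrm{Var}_{RL}(L)$ is the minimum of $|N|$ over all right-linear grammars generating $L$; $\mathrm{RL}_n^V=\{L\text{ regular}:\mathrm{Var}_{RL}(L)\le n\}$. *)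

(* Defs.v *)
From Stdlib Require Import Relations.Relation_Operators.
From mathcomp Require Import all_boot.
Set Implicit Arguments. Unset Strict Implicit. Unset Printing Implicit Defensive.

Definition lang (V : finType) := seq V -> Prop.

Definition lang_eq (V : finType) (L M : lang V) := forall w, L w <-> M w.

(* slt_k(B, I, E, F) over V, literally as in the paper:
   words of F, together with words a_1..a_n (n >= k) with
   a_1..a_k in B, a_{j+1}..a_{j+k} in I for 1 <= j <= n-k-1,
   a_{n-k+1}..a_n in E. *)
Definition slt (V : finType) (k : nat) (B I E F : lang V) : lang V :=
  fun w => F w \/
    [/\ k <= size w,
        B (take k w),
        (forall j, 1 <= j -> j <= size w - k - 1 -> I (take k (drop j w))) &
        E (drop (size w - k) w)].

Definition SLT (V : finType) (k : nat) (L : lang V) : Prop :=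
  exists B I E F : lang V,
    [/\ (forall w, B w -> size w = k),
        (forall w, I w -> size w = k),
        (forall w, E w -> size w = k),
        (forall w, F w -> size w <= k - 1) &
        lang_eq L (slt k B I E F)].

(* Right-linear grammar with n nonterminals 'I_n and terminal alphabet V:
   a finite list of rules A -> w B  (Some B)  or  A -> w  (None). *)
Record rl_grammar (V : finType) (n : nat) := RLGrammar {
  rl_rules : seq ('I_n * seq V * option 'I_n);
  rl_start : 'I_n }.

Definition sform (V : finType) (n : nat) := (seq V * option 'I_n)%type.

Definition rl_step (V : finType) (n : nat) (G : rl_grammar V n)
  (x y : sform V n) : Prop :=
  exists u A w oB, x = (u, Some A) /\ y = (u ++ w, oB) /\ (A, w, oB) \in rl_rules G.

Definition rl_lang (V : finType) (n : nat) (G : rl_grammar V n) : lang V :=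
  fun w => clos_refl_trans (sform V n) (@rl_step V n G) ([::], Some (rl_start G)) (w, None).

(* RL_n^V = { L regular : Var_RL(L) <= n }, i.e. L is generated by a right-linear
   grammar with at most n nonterminals (such L is automatically regular). *)
Definition RLV (V : finType) (n : nat) (L : lang V) : Prop :=
  exists m, m <= n /\ exists G : rl_grammar V m, lang_eq L (rl_lang G).

Definition lang_a (V : finType) (a : V) : lang V := fun w => w = [:: a].

Definition lang_aba (V : finType) (a b : V) : lang V :=
  fun w => w = [:: a] \/ exists m, w = a :: nseq m b ++ [:: a].

(* Main.v *)
Require Import Defs.
From Stdlib Require Import Relations.Relation_Operators.
From mathcomp Require Import all_boot zify.
Set Implicit Arguments. Unset Strict Implicit.

Section S.
Variables (V : finType) (a b : V).
Hypothesis hab : a != b.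

Lemma slt_aba : SLT 1 (lang_aba a b).
Proof.
exists (fun w => w = [:: a]), (fun w => w = [:: b]), (fun w => w = [:: a]), (fun _ => False).
split; [by move=> w -> | by move=> w -> | by move=> w -> | by [] |].
move=> w; split.
- case=> [->|[m ->]].
    right; split => //= j H1 H2; exfalso; move: H1 H2; rewrite subnn; case: j => //.
  right; split => //=; first by rewrite take0.
  + case=> // i _; rewrite size_cat size_nseq /= => Hi.
    have Hi' : i < size (nseq m b ++ [:: a]) by rewrite size_cat size_nseq addn1; lia.
    rewrite (drop_nth b Hi') nth_cat size_nseq.
    have -> : i < m by lia.
    by rewrite nth_nseq if_same /= take0.
  + by rewrite size_cat size_nseq subn1 addn1 /= drop_size_cat ?size_nseq.
- case=> // -[]; case: w => [|x w'] //= _ [->].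
  case/lastP: w' => [|m y]; first by left.
  rewrite size_rcons subn1 /= -cats1 drop_size_cat // => H0 Hmid [->]; right; exists (size m).
  congr (_ :: _ ++ _); apply/all_pred1P; apply/(all_nthP b) => i Hi.
  have := Hmid i.+1 erefl Hi.
  have Hi' : i < size (m ++ [:: y]) by rewrite size_cat addn1; lia.
  rewrite /= (drop_nth b Hi') nth_cat Hi /= take0; by case=> ->.
Qed.

Lemma not_slt_a : ~ SLT 1 (lang_a a).
Proof.
case=> B [I [E [F [_ _ _ HF H]]]].
have [|] := (H [:: a]).1 erefl; first by move/HF.
case=> _ HB _ HE.
have : slt 1 B I E F [:: a; a].
  by right; split => // j; case: j.
by move/(H [:: a; a]).
Qed.

Lemma rlv_a : RLV 1 (lang_a a).
Proof.
exists 1; split => //; exists (RLGrammar [:: (ord0, [:: a], None)] ord0) => w; split.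
- move=> ->; apply: rt_step; exists [::], ord0, [:: a], None; split => //; split => //.
  by rewrite mem_seq1.
- rewrite /rl_lang /=.
  set P := fun x : sform V 1 => match x with (u, Some _) => u = [::] | (u, None) => u = [:: a] end.
  suff: forall x y, clos_refl_trans _ (rl_step (RLGrammar [:: (ord0, [:: a], None)] ord0)) x y -> P x -> P y.
    by move=> Hs Hd; apply: (Hs _ _ Hd).
  move=> x y; elim => //.
  + move=> x0 y0 [u [A [w0 [oB [-> [-> Hr]]]]]] /= ->.
    by move: Hr; rewrite mem_seq1 => /eqP [_ -> ->].
  + by move=> x0 y0 z0 _ H1 _ H2 /H1 /H2.
Qed.

Lemma rt_shift (n : nat) (G : rl_grammar V n) r x y :
  clos_refl_trans _ (rl_step G) x y ->
  clos_refl_trans _ (rl_step G) (r ++ x.1, x.2) (r ++ y.1, y.2).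
Proof.
elim => //.
- move=> x0 y0 [u [A [w0 [oB [-> [-> Hr]]]]]]; apply: rt_step.
  by exists (r ++ u), A, w0, oB; rewrite catA.
- by move=> *; apply: rt_refl.
- by move=> x0 y0 z0 _ H1 _ H2; apply: rt_trans H1 H2.
Qed.

Lemma rl_prepend (G : rl_grammar V 1) r w :
  (ord0, r, Some ord0) \in rl_rules G -> rl_lang G w -> rl_lang G (r ++ w).
Proof.
move=> Hr Hw; have := rt_shift r Hw; rewrite /= cats0 => H.
apply: rt_trans H; apply: rt_step; exists [::], (rl_start G), r, (Some ord0).
by rewrite (ord1 (rl_start G)).
Qed.

Lemma rl_only_T (n : nat) (G : rl_grammar V n) :
  (forall A w B, (A, w, Some B) \in rl_rules G -> w = [::]) ->
  forall w, rl_lang G w -> exists A, (A, w, None) \in rl_rules G.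
Proof.
move=> Hrec w.
set P := fun x : sform V n => match x with (u, Some _) => u = [::] | (u, None) => exists A, (A, u, None) \in rl_rules G end.
suff: forall x y, clos_refl_trans _ (rl_step G) x y -> P x -> P y.
  by move=> Hs Hd; apply: (Hs _ _ Hd).
move=> x y; elim => //.
+ move=> x0 y0 [u [A [w0 [oB [-> [-> Hr]]]]]] /= ->.
  by case: oB Hr => [B|] Hr /=; [apply: Hrec Hr | exists A].
+ by move=> x0 y0 z0 _ H1 _ H2 /H1 /H2.
Qed.

Lemma aba_count w : lang_aba a b w -> 0 < count_mem a w <= 2 /\ head a w = a.
Proof.
have Hb : count_mem a (nseq _ b) = 0.
  by move=> m; elim: m => //= m ->; rewrite addn0 eq_sym (negbTE hab).
case=> [->|[m ->]]; first by rewrite /= eqxx.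
by rewrite /= count_cat Hb /= eqxx.
Qed.

Lemma sumn_mem (T : eqType) (f : T -> nat) s x : x \in s -> f x <= sumn (map f s).
Proof.
elim: s => //= y s IH; rewrite in_cons => /orP [/eqP ->|/IH]; first exact: leq_addr.
move=> H; apply: (leq_trans H); exact: leq_addl.
Qed.

Lemma not_rlv_aba : ~ RLV 1 (lang_aba a b).
Proof.
case=> m [Hm [G HG]].
case: m Hm G HG => [|[|m]] // _ G HG.
  by case: (rl_start G).
have HL : forall w, lang_aba a b w -> rl_lang G w by move=> w /HG.
have Hrec : forall A w B, (A, w, Some B) \in rl_rules G -> w = [::].
  move=> A w B; rewrite (ord1 A) (ord1 B) => Hr.
  have Ha : lang_aba a b [:: a] by left.
  have H1 := rl_prepend Hr (HL _ Ha).
  have H2 := rl_prepend Hr H1.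
  have [C2 _] := aba_count ((HG _).2 H2).
  have [_ Hh] := aba_count ((HG _).2 H1).
  case: w {Hr H1 H2} C2 Hh => // x w /= C2 Hh; subst x.
  move: C2; rewrite !count_cat /= !count_cat /= eqxx /nat_of_bool; lia.
set N := sumn [seq size p.1.2 | p <- rl_rules G].
have Hw : lang_aba a b (a :: nseq N b ++ [:: a]) by right; exists N.
have [A HA] := rl_only_T Hrec ((HG _).1 Hw).
have := sumn_mem (fun p : 'I_1 * seq V * option 'I_1 => size p.1.2) HA.
rewrite -/N /= size_cat size_nseq; lia.
Qed.
End S.

Theorem mainTheorem12 (V : finType) (a b : V) (hab : a != b) :
  ((exists L : lang V, SLT 1 L /\ ~ RLV 1 L) /\
   (exists L : lang V, RLV 1 L /\ ~ SLT 1 L)) /\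
  (RLV 1 (lang_a a) /\ ~ SLT 1 (lang_a a)) /\
  (SLT 1 (lang_aba a b) /\ ~ RLV 1 (lang_aba a b)).
Proof.
have H1 : SLT 1 (lang_aba a b) by apply: slt_aba.
have H2 : ~ RLV 1 (lang_aba a b) by apply: not_rlv_aba.
have H3 : RLV 1 (lang_a a) by apply: rlv_a.
have H4 : ~ SLT 1 (lang_a a) by apply: not_slt_a.
split; [split; [exists (lang_aba a b) | exists (lang_a a)] | split]; by split.
Qed.
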